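(* Let $S=\sigma_0,\dots,\sigma_l$ be an $H$-recoloring sequence of $G$, and let $W$ be any walk in $G$ from a vertex $u$ to a vertex $v$. Then $$\overline{S(v)} = \overline{\sigma_0(W)}^{-1}\cdot \overline{S(u)}\cdot \overline{\sigma_l(W)}.$$
   Context: All graphs are finite and undirected. $G$ is a connected loopless graph with at least one edge. $H$ is a connected graph with at least one edge, possibly with loops, having the monochromatic neighborhood property: for all $a,b\in V(H)$, $|N_H(a)\cap N_H(b)|\le 1$, where $N_H(a)=\{w: aw\in E(H)\}$ (so $a\in N_H(a)$ iff $H$ has a loop at $a$). An $H$-coloring of $G$ is a map $\sigma:V(G)\to V(H)$ such that $uv\in E(G)$ implies $\sigma(u)\sigma(v)\in E(H)$. An $H$-recoloring sequence is a sequence $\sigma_0,\dots,\sigma_l$ of $H$-colorings of $G$ in which any two consecutive colorings differ in the color of exactly one vertex. Walks: an oriented edge of a graph is an ordered pair $(x,y)$ with $xy$ an edge; $(x,y)^{-1}=(y,x)$. A walk from $x$ to $y$ is a sequence of oriented edges $e_1\dots e_k$ where $e_1$ starts at $x$, $e_k$ ends at $y$, and each $e_{i+1}$ starts where $e_i$ ends; $\varepsilon$ denotes the empty walk; the length is $k$; $W_1W_2$ is concatenation and $W^{-1}=e_k^{-1}\dots e_1^{-1}$. A walk is reduced if it has no two consecutive edges $e_ie_{i+1}$ with $e_{i+1}=e_i^{-1}$; $\overline{W}$ denotes the (unique) reduced walk obtained from $W$ by repeatedly deleting such consecutive pairs. For reduced walks $A,B$ with $B$ starting where $A$ ends, $A\cdot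 B:=\overline{AB}$ (an associative partial operation). $\pi(H)$ (the fundamental groupoid) is the set of reduced walks in $H$ with $\cdot$ and inversion. For a walk $W=(x_0,x_1)(x_1,x_2)\dots(x_{k-1},x_k)$ in $G$ and an $H$-coloring $\alpha$, $\alpha(W)$ is the walk $(\alpha(x_0),\alpha(x_1))\dots(\alpha(x_{k-1}),\alpha(x_k))$ in $H$. Vertex walks: if $\sigma_1$ is obtained from $\sigma_0$ by changing the color of one vertex $w$ from $a$ to $b\neq a$, then all neighbors of $w$ have the same color $h$ in $\sigma_0$ and $\sigma_1$ (the unique element of $N_H(a)\cap N_H(b)$). For this one-step sequence $S=\sigma_0,\sigma_1$ define, for $v\in V(G)$, $S(v)=\varepsilon$ if $v\neq w$ and $S(w)=(a,h)(h,b)$. For the empty sequence ($l=0$) $S(v)=\varepsilon$, and for $S=\sigma_0,\dots,\sigma_l$ with $l>1$, $S(v)=S_1(v)S_2(v)\cdots S_l(v)$ where $S_i$ is the one-step sequence $\sigma_{i-1},\sigma_i$. Thus $S(v)$ is a walk in $H$ from $\sigma_0(v)$ to $\sigma_l(v)$. *)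

(* Defs.v *)
From mathcomp Require Import all_boot.
Set Implicit Arguments. Unset Strict Implicit. Unset Printing Implicit Defensive.

Definition oedge (T : Type) := (T * T)%type.
Definition walk (T : Type) := seq (oedge T).

Fixpoint is_walk (T : Type) (e : T -> T -> bool) (x y : T) (W : walk T) : Prop :=
  match W with
  | [::] => x = y
  | ed :: W' => ed.1 = x /\ e ed.1 ed.2 /\ is_walk e ed.2 y W'
  end.

Definition einv (T : Type) (ed : oedge T) : oedge T := (ed.2, ed.1).

Definition winv (T : Type) (W : walk T) : walk T := rev (map (@einv T) W).

Fixpoint reducedb (T : eqType) (W : walk T) : bool :=
  match W with
  | e1 :: ((e2 :: _) as W') => (e2 != einv e1) && reducedb W'
  | _ => true
  end.

Definition reduce (T : eqType) (W : walk T) : walk T :=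
  foldr (fun ed acc => match acc with
                       | ed' :: t => if ed' == einv ed then t else ed :: acc
                       | [::] => [:: ed]
                       end) [::] W.

Definition wdot (T : eqType) (A B : walk T) : walk T := reduce (A ++ B).

Definition wmap (V C : Type) (a : V -> C) (W : walk V) : walk C :=
  map (fun ed => (a ed.1, a ed.2)) W.

Definition is_Hcoloring (V C : Type) (eG : V -> V -> bool) (eH : C -> C -> bool)
  (s : V -> C) : Prop := forall u v, eG u v -> eH (s u) (s v).

Definition differ_one (V : Type) (C : eqType) (s t : V -> C) : Prop :=
  exists w, s w != t w /\ forall x, x <> w -> s x = t x.

(* sigma_0, rest : the recoloring sequence sigma_0 :: rest *)
Fixpoint is_recoloring_seq (V : Type) (C : eqType) (eG : V -> V -> bool)
  (eH : C -> C -> bool) (s0 : V -> C) (rest : seq (V -> C)) : Prop :=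
  match rest with
  | [::] => is_Hcoloring eG eH s0
  | s1 :: r => is_Hcoloring eG eH s0 /\ differ_one s0 s1 /\
               is_recoloring_seq eG eH s1 r
  end.

(* one-step vertex walk S(v) for S = s, t:  (a,h)(h,b) at the recolored
   vertex, with h the (unique) common neighbour of a and b; empty elsewhere *)
Definition step_walk (V : Type) (C : finType) (eH : rel C) (s t : V -> C) (v : V)
  : walk C :=
  if s v == t v then [::] else
  match [pick h | eH (s v) h && eH h (t v)] with
  | Some h => [:: (s v, h); (h, t v)]
  | None => [::]
  end.

Fixpoint seq_walk (V : Type) (C : finType) (eH : rel C) (s0 : V -> C)
  (rest : seq (V -> C)) (v : V) : walk C :=
  match rest with
  | [::] => [::]
  | s1 :: r => step_walk eH s0 s1 v ++ seq_walk eH s1 r v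
  end.

Definition mono_nbhd (C : finType) (eH : rel C) : Prop :=
  forall a b : C, #|[pred w | eH a w && eH b w]| <= 1.

(* Main.v *)
Require Import Defs.
From mathcomp Require Import all_boot.
Set Implicit Arguments. Unset Strict Implicit. Unset Printing Implicit Defensive.

Section W.
Variable T : eqType.
Implicit Types (e : oedge T) (A B Y Z : walk T).

Definition rstep e (acc : walk T) : walk T :=
  match acc with
  | ed' :: t => if ed' == einv e then t else e :: acc
  | [::] => [:: e]
  end.
Definition Ract A Y := foldr rstep Y A.

Lemma reduce_cons e A : reduce (e :: A) = rstep e (reduce A).
Proof. by []. Qed.
Lemma reduceE A : reduce A = Ract A [::].
Proof. by []. Qed.
Lemma Ract_cat A B Y : Ract (A ++ B) Y = Ract A (Ract B Y).
Proof. by rewrite /Ract foldr_cat. Qed.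

Lemma einvK e : einv (einv e) = e.
Proof. by case: e. Qed.

Lemma reducedb_tail e t : reducedb (e :: t) -> reducedb t.
Proof. by case: t => //= e' t /andP[]. Qed.

Lemma rstep_red e Y : reducedb Y -> reducedb (rstep e Y).
Proof.
case: Y => [|e' t] //= H; case: ifP => E; first exact: reducedb_tail H.
by rewrite /= E H.
Qed.

Lemma Ract_red A Y : reducedb Y -> reducedb (Ract A Y).
Proof. by elim: A => //= e A IH H; apply: rstep_red; apply: IH. Qed.

Lemma rstep_cancel e Y : reducedb Y -> rstep (einv e) (rstep e Y) = Y.
Proof.
case: Y => [|e' t] /=; first by rewrite einvK eqxx.
case: ifP => E H.
  move/eqP: E H => ->; case: t => [|e'' t] //= /andP[H1 _].
  by rewrite (negbTE H1).
by rewrite /= einvK eqxx.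
Qed.

Lemma Ract_rstep e Z Y : reducedb Y ->
  Ract (rstep e Z) Y = rstep e (Ract Z Y).
Proof.
case: Z => [|e' t] //= H; case: ifP => //= /eqP ->.
by rewrite -{1}(einvK e) rstep_cancel //; apply: Ract_red.
Qed.

Lemma Ract_reduce A Y : reducedb Y -> Ract (reduce A) Y = Ract A Y.
Proof.
move=> H; elim: A => //= e A IH.
by rewrite Ract_rstep // IH.
Qed.

Definition weq A B := forall Y, reducedb Y -> Ract A Y = Ract B Y.

Lemma weq_refl A : weq A A. Proof. by []. Qed.
Lemma weq_sym A B : weq A B -> weq B A. Proof. by move=> h Y HY; rewrite h. Qed.
Lemma weq_trans A B Z : weq A B -> weq B Z -> weq A Z.
Proof. by move=> h1 h2 Y HY; rewrite h1 // h2. Qed.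
Lemma weq_cat A A' B B' : weq A A' -> weq B B' -> weq (A ++ B) (A' ++ B').
Proof.
move=> h1 h2 Y HY; rewrite !Ract_cat h2 // h1 //; exact: Ract_red.
Qed.
Lemma weq_reduce A : weq (reduce A) A.
Proof. by move=> Y HY; rewrite Ract_reduce. Qed.
Lemma weq_eq A B : weq A B -> reduce A = reduce B.
Proof. by move=> h; rewrite !reduceE h. Qed.
Lemma weq_pair x : weq [:: x; einv x] [::].
Proof. by move=> Y HY /=; rewrite -{1}(einvK x) rstep_cancel. Qed.
Lemma weq_winv Z : weq (winv Z ++ Z) [::].
Proof.
elim: Z => [|e Z IH] //= Y HY.
rewrite /winv /= rev_cons -cats1 -catA Ract_cat /=.
rewrite rstep_cancel; last exact: Ract_red.
by rewrite -Ract_cat IH.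
Qed.
End W.

Section G.
Variables (V C : finType) (eG : rel V) (eH : rel C).
Hypotheses (eG_sym : symmetric eG) (eG_irr : irreflexive eG)
  (eH_sym : symmetric eH) (eH_mono : mono_nbhd eH).

Lemma weq_cons (e : oedge C) A B : weq A B -> weq (e :: A) (e :: B).
Proof. by move=> h; apply: (@weq_cat _ [:: e] [:: e]). Qed.

Lemma rec_col s0 rest : is_recoloring_seq eG eH s0 rest -> is_Hcoloring eG eH s0.
Proof. by case: rest => [|s1 r] //= [? _]. Qed.

Section Step.
Variables (s t : V -> C) (w : V).
Hypotheses (hs : is_Hcoloring eG eH s) (ht : is_Hcoloring eG eH t)
  (hw : s w != t w) (hoth : forall x, x <> w -> s x = t x).

Lemma step_other x : x <> w -> step_walk eH s t x = [::].
Proof. by move=> h; rewrite /step_walk hoth // eqxx. Qed.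

Lemma step_w z : eG w z -> step_walk eH s t w = [:: (s w, s z); (s z, t w)].
Proof.
move=> ewz.
have zw : z <> w by move=> E; rewrite E eG_irr in ewz.
have hc1 : eH (s w) (s z) by apply: hs.
have hc2 : eH (s z) (t w).
  by rewrite (hoth zw); apply: ht; rewrite eG_sym.
rewrite /step_walk (negbTE hw).
case: pickP => [h /andP[h1 h2]|none]; last by move: (none (s z)); rewrite hc1 hc2.
have := eH_mono (s w) (t w); move/card_le1_eqP => E.
suff -> : h = s z by [].
apply: E; rewrite inE /= ?h1 ?hc1 /=; by rewrite eH_sym.
Qed.

Lemma edge_lemma x y : eG x y ->
  weq (step_walk eH s t x ++ [:: (t x, t y)]) ((s x, s y) :: step_walk eH s t y).
Proof.
move=> exy.
have [xw|xw] := eqVneq x w.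
  subst x.
  have yw : y <> w by move=> E; rewrite E eG_irr in exy.
  rewrite (step_w exy) (step_other yw) -(hoth yw) /=.
  apply: (@weq_cat _ [:: (s w, s y)] [:: (s w, s y)] [:: (s y, t w); (t w, s y)] [::]) => //.
  exact: (weq_pair (s y, t w)).
have xw' : x <> w by apply/eqP.
have [yw|yw] := eqVneq y w.
  subst y.
  rewrite (step_other xw') -(hoth xw') (step_w (z := x)); last by rewrite eG_sym.
  rewrite /=.
  apply: (@weq_cat _ [::] [:: (s x, s w); (s w, s x)] [:: (s x, t w)] [:: (s x, t w)]) => //.
  apply: weq_sym; exact: (weq_pair (s x, s w)).
have yw' : y <> w by apply/eqP.
by rewrite (step_other xw') (step_other yw') -(hoth xw') -(hoth yw').
Qed.

Lemma step_walk_W x y W : is_walk eG x y W ->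
  weq (step_walk eH s t x ++ wmap t W) (wmap s W ++ step_walk eH s t y).
Proof.
elim: W x => [|ed W IH] x /=; first by move=> ->; rewrite cats0.
case: ed => a b /= [-> [exb hW]].
rewrite -cat1s catA.
apply: weq_trans (@weq_cat _ _ _ (wmap t W) (wmap t W) (edge_lemma exb) (@weq_refl _ _)) _.
rewrite cat_cons; apply: weq_cons; exact: IH.
Qed.
End Step.

Lemma seq_main u v W : is_walk eG u v W -> forall s0 rest,
  is_recoloring_seq eG eH s0 rest ->
  weq (seq_walk eH s0 rest u ++ wmap (last s0 rest) W)
      (wmap s0 W ++ seq_walk eH s0 rest v).
Proof.
move=> hW s0 rest; elim: rest s0 => [|s1 r IH] s0 /=.
  by move=> _; rewrite cats0.
move=> [hs0 [[w [hw hoth]] hr]].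
rewrite -catA.
apply: weq_trans (@weq_cat _ _ _ _ _ (@weq_refl _ _) (IH _ hr)) _.
rewrite catA catA.
apply: weq_cat; last exact: weq_refl.
exact: (step_walk_W hs0 (rec_col hr) hw hoth hW).
Qed.
End G.

Theorem mainTheorem1 (V C : finType) (eG : rel V) (eH : rel C)
  (eG_sym : symmetric eG) (eG_irr : irreflexive eG)
  (eG_conn : forall x y, connect eG x y) (eG_edge : exists x y, eG x y)
  (eH_sym : symmetric eH)
  (eH_conn : forall x y, connect eH x y) (eH_edge : exists x y, eH x y)
  (eH_mono : mono_nbhd eH)
  (s0 : V -> C) (rest : seq (V -> C))
  (hS : is_recoloring_seq eG eH s0 rest)
  (u v : V) (W : walk V) (hW : is_walk eG u v W) :
  reduce (seq_walk eH s0 rest v) =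
  wdot (wdot (winv (reduce (wmap s0 W))) (reduce (seq_walk eH s0 rest u)))
       (reduce (wmap (last s0 rest) W)).
Proof.
rewrite /wdot; apply: weq_eq; apply: weq_sym.
set Z := reduce (wmap s0 W).
apply: weq_trans (@weq_cat _ _ _ _ _ (weq_reduce _) (weq_reduce _)) _.
rewrite -catA.
apply: weq_trans (@weq_cat _ _ _ _ _ (weq_refl _) (@weq_cat _ _ _ _ _ (weq_reduce _) (weq_refl _))) _.
apply: weq_trans (@weq_cat _ _ _ _ _ (weq_refl _)
   (seq_main eG_sym eG_irr eH_sym eH_mono hW hS)) _.
apply: weq_trans (@weq_cat _ _ _ _ _ (weq_refl (winv Z))
   (@weq_cat _ _ _ _ _ (weq_sym (weq_reduce (wmap s0 W))) (weq_refl _))) _.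
rewrite catA.
apply: weq_trans (@weq_cat _ _ _ _ _ (weq_winv Z) (weq_refl _)) _.
exact: weq_refl.
Qed.
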